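(* Let $m$ be even, $\mathcal{A}\in T_{m,n}$, $\mathcal{B}\in S_{m,n}$ positive definite, $F(\mathbf{z})=F(\mathbf{x},t)=(t^2\mathcal{B}-\mathcal{A})\mathbf{x}^{m-1}$, $\tau\in(0,1)$, and let $H_\tau(\mathbf{z})=\begin{pmatrix}\Phi_\tau(\mathbf{z})\\ \mathbf{x}^\top\mathbf{x}-1\end{pmatrix}$ with $\Phi_\tau(\mathbf{z})=[\phi_\tau(x_i,F_i(\mathbf{z}))]_{i=1}^n$. Fix $\mathbf{z}=(\mathbf{x},t)\in\mathbb{R}^{n+1}$ and let $V\in\mathbb{R}^{n\times(n+1)}$ be the matrix produced by Procedure P (see context) with this $\tau$. Suppose $\nabla_{\mathbf{x}}F_i(\mathbf{z})^\top\mathbf{c}\neq0$ for all $i\in S_3$. Then $G=\begin{pmatrix}V\\ 2\mathbf{x}^\top\ \ 0\end{pmatrix}$ belongs to the B-subdifferential $\partial_BH_\tau(\mathbf{z})$.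
   Context: $(\mathcal{A}\mathbf{x}^{m-1})_i=\sum_{i_2,\ldots,i_m}a_{i i_2\ldots i_m}x_{i_2}\cdots x_{i_m}$; $\mathcal{B}$ symmetric with $\mathcal{B}\mathbf{x}^m>0$ for $\mathbf{x}\ne0$. $\phi_\tau(a,b)=\tau(a+b-\sqrt{a^2+b^2})+(1-\tau)a_+b_+$, $x_+=\max\{x,0\}$. $\partial_BG(\mathbf{z})$ is the set of limits of Jacobians $JG(\mathbf{z}^k)$ along sequences of differentiability points $\mathbf{z}^k\to\mathbf{z}$. $\nabla F_i(\mathbf{z})\in\mathbb{R}^{n+1}$ is the gradient of $F_i$ w.r.t. $\mathbf{z}=(\mathbf{x},t)$ and $\nabla_{\mathbf{x}}F_i(\mathbf{z})\in\mathbb{R}^n$ the gradient w.r.t. $\mathbf{x}$; $\mathbf{e}_i$ is the $i$th unit vector of $\mathbb{R}^n$, $\|\cdot\|$ the Euclidean norm, and $V_i$ the $i$th row of $V$. Procedure P (given $\tau\in(0,1]$ and $\mathbf{z}$): Let $S_1=\{i: x_i=0,F_i(\mathbf{z})=0\}$, $S_2=\{i:x_i=0,F_i(\mathbf{z})>0\}$, $S_3=\{i:x_i>0,F_i(\mathbf{z})=0\}$, $S_4=\{i:x_i>0,F_i(\mathbf{z})>0\}$. Let $\mathbf{c}\in\mathbb{R}^n$ with $c_i=1$ for $i\in S_1\cup S_2\cup S_3$ and $c_i=0$ otherwise. Writing $s_i=\nabla_{\mathbf{x}}F_i(\mathbf{z})^\top\mathbf{c}$: for $i\in S_1$: $V_i=\tau\big(1+\tfrac{c_i}{\|(c_i,s_i)\|}\big)(\mathbf{e}_i^\top,0)+\tau\big(1+\tfrac{s_i}{\|(c_i,s_i)\|}\big)\nabla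 F_i(\mathbf{z})^\top$; for $i\in S_3$: $V_i=(\tau+(1-\tau)x_i)\nabla F_i(\mathbf{z})^\top$ if $s_i<0$, and $V_i=\tau\nabla F_i(\mathbf{z})^\top$ otherwise; for $i\in S_4$: $V_i=\big[\tau\big(1-\tfrac{x_i}{\|(x_i,F_i(\mathbf{z}))\|}\big)+(1-\tau)F_i(\mathbf{z})\big](\mathbf{e}_i^\top,0)+\big[\tau\big(1-\tfrac{F_i(\mathbf{z})}{\|(x_i,F_i(\mathbf{z}))\|}\big)+(1-\tau)x_i\big]\nabla F_i(\mathbf{z})^\top$; for $i\notin S_1\cup S_3\cup S_4$: $V_i=\tau\big(1-\tfrac{x_i}{\|(x_i,F_i(\mathbf{z}))\|}\big)(\mathbf{e}_i^\top,0)+\tau\big(1-\tfrac{F_i(\mathbf{z})}{\|(x_i,F_i(\mathbf{z}))\|}\big)\nabla F_i(\mathbf{z})^\top$. *)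

(* Defs.v *)
From Stdlib Require Import Reals Lra List Permutation.
Open Scope R_scope.

(* Vectors in R^n are functions nat -> R; only indices < n are meaningful.
   A point z = (x,t) in R^{n+1}: x_i = z i (i < n), t = z n. *)

Fixpoint rsum (n : nat) (f : nat -> R) : R :=
  match n with O => 0 | S k => rsum k f + f k end.

Definition vnorm (q : nat) (v : nat -> R) : R := sqrt (rsum q (fun j => v j ^ 2)).

Fixpoint tsum (n k : nat) (f : list nat -> R) : R :=
  match k with
  | O => f nil
  | S k' => rsum n (fun j => tsum n k' (fun l => f (j :: l)))
  end.

Definition prodx (x : nat -> R) (l : list nat) : R :=
  fold_right (fun j acc => x j * acc) 1 l.

(* an order-m, dimension-n real tensor: entries A [i1; ...; im] *)
Definition tensor := list nat -> R.

Definition tapp (m n : nat) (A : tensor) (x : nat -> R) (i : nat) : R :=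
  tsum n (m - 1) (fun l => A (i :: l) * prodx x l).

Definition tform (m n : nat) (B : tensor) (x : nat -> R) : R :=
  tsum n m (fun l => B l * prodx x l).

Definition sym_tensor (m n : nat) (B : tensor) : Prop :=
  forall l l', length l = m -> Forall (fun j => (j < n)%nat) l ->
    Permutation l l' -> B l = B l'.

Definition posdef_tensor (m n : nat) (B : tensor) : Prop :=
  forall x : nat -> R, (exists j, (j < n)%nat /\ x j <> 0) -> 0 < tform m n B x.

Definition Fmap (m n : nat) (A B : tensor) (z : nat -> R) : nat -> R :=
  fun i => (z n) ^ 2 * tapp m n B z i - tapp m n A z i.

Definition posp (x : R) : R := Rmax x 0.

Definition phi (tau a b : R) : R :=
  tau * (a + b - sqrt (a ^ 2 + b ^ 2)) + (1 - tau) * posp a * posp b.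

Definition Hmap (m n : nat) (A B : tensor) (tau : R) (z : nat -> R) : nat -> R :=
  fun i => if (i <? n)%nat then phi tau (z i) (Fmap m n A B z i)
           else rsum n (fun j => z j ^ 2) - 1.

Definition jac_at (p q : nat) (f : (nat -> R) -> (nat -> R)) (z : nat -> R)
  (J : nat -> nat -> R) : Prop :=
  forall eps, 0 < eps -> exists delta, 0 < delta /\
    forall w : nat -> R, vnorm q (fun j => w j - z j) < delta ->
      vnorm p (fun i => f w i - f z i - rsum q (fun j => J i j * (w j - z j)))
        <= eps * vnorm q (fun j => w j - z j).

Definition in_B_subdiff (p q : nat) (f : (nat -> R) -> (nat -> R)) (z : nat -> R)
  (G : nat -> nat -> R) : Prop :=
  exists (zk : nat -> nat -> R) (Jk : nat -> nat -> nat -> R),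
    (forall k, jac_at p q f (zk k) (Jk k)) /\
    (forall j, (j < q)%nat -> Un_cv (fun k => zk k j) (z j)) /\
    (forall i j, (i < p)%nat -> (j < q)%nat -> Un_cv (fun k => Jk k i j) (G i j)).

Definition ecol (i j : nat) : R := if Nat.eqb i j then 1 else 0.

Definition norm2 (a b : R) : R := sqrt (a ^ 2 + b ^ 2).

(* Procedure P.  JF = Jacobian of F at z (row i = grad F_i(z)^T, column n = d/dt),
   Fz = F(z). *)
Definition cvec (n : nat) (z Fz : nat -> R) (i : nat) : R :=
  if Req_EM_T (z i) 0 then
    (if Req_EM_T (Fz i) 0 then 1 else if Rlt_dec 0 (Fz i) then 1 else 0)   (* S1, S2 *)
  else if Rlt_dec 0 (z i) then
    (if Req_EM_T (Fz i) 0 then 1 else 0)                                    (* S3 *)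
  else 0.

Definition svec (n : nat) (z Fz : nat -> R) (JF : nat -> nat -> R) (i : nat) : R :=
  rsum n (fun j => JF i j * cvec n z Fz j).

Definition procP (n : nat) (tau : R) (z Fz : nat -> R) (JF : nat -> nat -> R)
  (i j : nat) : R :=
  let xi := z i in let Fi := Fz i in
  let ci := cvec n z Fz i in let si := svec n z Fz JF i in
  let default := tau * (1 - xi / norm2 xi Fi) * ecol i j
                 + tau * (1 - Fi / norm2 xi Fi) * JF i j in
  if Req_EM_T xi 0 then
    (if Req_EM_T Fi 0 then   (* S1 *)
       tau * (1 + ci / norm2 ci si) * ecol i j + tau * (1 + si / norm2 ci si) * JF i j
     else default)
  else if Rlt_dec 0 xi then
    (if Req_EM_T Fi 0 then   (* S3 *)
       (if Rlt_dec si 0 then (tau + (1 - tau) * xi) * JF i j else tau * JF i j)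
     else if Rlt_dec 0 Fi then   (* S4 *)
       (tau * (1 - xi / norm2 xi Fi) + (1 - tau) * Fi) * ecol i j
       + (tau * (1 - Fi / norm2 xi Fi) + (1 - tau) * xi) * JF i j
     else default)
  else default.

Definition Gmat (n : nat) (V : nat -> nat -> R) (z : nat -> R) (i j : nat) : R :=
  if (i <? n)%nat then V i j else if (j <? n)%nat then 2 * z j else 0.

(* Main.v *)
Require Import Defs.
From Stdlib Require Import Reals Lra Lia List Permutation IndefiniteDescription Classical.
Open Scope R_scope.

Lemma rsum_ext n f g : (forall j, (j < n)%nat -> f j = g j) -> rsum n f = rsum n g.
Proof. induction n; simpl; intros H; auto. rewrite IHn by (intros; apply H; lia). rewrite H by lia; auto. Qed.

Lemma rsum_plus n f g : rsum n (fun j => f j + g j) = rsum n f + rsum n g.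
Proof. induction n; simpl; [lra|]. rewrite IHn; ring. Qed.

Lemma rsum_scal n c f : rsum n (fun j => c * f j) = c * rsum n f.
Proof. induction n; simpl; [ring|]. rewrite IHn; ring. Qed.

Lemma rsum_zero n : rsum n (fun _ => 0) = 0.
Proof. induction n; simpl; [ring|]. rewrite IHn; ring. Qed.

Lemma rsum_const n c : rsum n (fun _ => c) = INR n * c.
Proof. induction n; simpl rsum; [simpl; ring|]. rewrite IHn, S_INR; ring. Qed.

Lemma rsum_ecol n k f : (k < n)%nat -> rsum n (fun j => f j * ecol k j) = f k.
Proof. induction n; intros H; [lia|]. simpl. unfold ecol at 2.
  destruct (Nat.eq_dec k n) as [->|Hne].
  - rewrite Nat.eqb_refl. rewrite rsum_ext with (g := fun _ => 0). rewrite rsum_zero; ring.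
    intros j Hj. unfold ecol. replace (n =? j)%nat with false. ring. symmetry; apply Nat.eqb_neq; lia.
  - replace (k =? n)%nat with false by (symmetry; apply Nat.eqb_neq; lia). rewrite IHn by lia; ring. Qed.

Lemma rsum_abs n f : Rabs (rsum n f) <= rsum n (fun j => Rabs (f j)).
Proof. induction n; simpl. rewrite Rabs_R0; lra.
  eapply Rle_trans; [apply Rabs_triang|]. lra. Qed.

Lemma rsum_le n f g : (forall j, (j < n)%nat -> f j <= g j) -> rsum n f <= rsum n g.
Proof. induction n; simpl; intros H; [lra|]. specialize (IHn (fun j Hj => H j ltac:(lia))). specialize (H n ltac:(lia)). lra. Qed.

Lemma rsum_nonneg n f : (forall j, (j < n)%nat -> 0 <= f j) -> 0 <= rsum n f.
Proof. intros H. rewrite <- (rsum_zero n). apply rsum_le; auto. Qed.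

Lemma rsum_ge_term n f k : (forall j, (j < n)%nat -> 0 <= f j) -> (k < n)%nat -> f k <= rsum n f.
Proof. induction n; intros H Hk; [lia|]. simpl.
  destruct (Nat.eq_dec k n) as [->|].
  - assert (0 <= rsum n f) by (apply rsum_nonneg; intros; apply H; lia). lra.
  - assert (f k <= rsum n f) by (apply IHn; [intros; apply H; lia| lia]). specialize (H n ltac:(lia)). lra. Qed.

Lemma comp_le_vnorm q v j : (j < q)%nat -> Rabs (v j) <= vnorm q v.
Proof. intros Hj. unfold vnorm. rewrite <- sqrt_Rsqr_abs. apply sqrt_le_1_alt.
  rewrite Rsqr_pow2. apply (rsum_ge_term q (fun j => v j ^ 2)); auto. intros; apply pow2_ge_0. Qed.

Lemma vnorm_nonneg q v : 0 <= vnorm q v.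
Proof. apply sqrt_pos. Qed.

Lemma vnorm_le_sum_abs p v : vnorm p v <= rsum p (fun i => Rabs (v i)).
Proof. unfold vnorm. assert (H0: 0 <= rsum p (fun i => Rabs (v i))) by (apply rsum_nonneg; intros; apply Rabs_pos).
  rewrite <- (sqrt_pow2 _ H0). apply sqrt_le_1_alt. clear H0.
  induction p. simpl; lra.
  assert (H: 0 <= rsum p (fun i => Rabs (v i))) by (apply rsum_nonneg; intros; apply Rabs_pos).
  change (rsum p (fun j => v j ^ 2) + v p ^ 2 <= (rsum p (fun i => Rabs (v i)) + Rabs (v p)) ^ 2).
  assert (E: v p ^ 2 = Rabs (v p) ^2) by (rewrite <- Rsqr_pow2, <- Rsqr_pow2; apply Rsqr_abs).
  pose proof (Rabs_pos (v p)) as H1. rewrite E.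
  revert IHp H H1. generalize (rsum p (fun j => v j ^ 2)) (rsum p (fun i => Rabs (v i))) (Rabs (v p)).
  intros. nra. Qed.

Lemma vnorm_ecol q j s : (j < q)%nat -> vnorm q (fun l => s * ecol j l) = Rabs s.
Proof. intros Hj. unfold vnorm. rewrite rsum_ext with (g := fun l => (s^2) * ecol j l).
  rewrite rsum_ecol; auto. rewrite <- sqrt_Rsqr_abs, Rsqr_pow2; auto.
  intros l _. unfold ecol. destruct (j =? l)%nat; ring. Qed.

Lemma CV_const c : Un_cv (fun _ => c) c.
Proof. intros e He. exists 0%nat. intros. unfold Rdist. rewrite Rminus_diag, Rabs_R0. auto. Qed.

Lemma CV_inv' u l : Un_cv u l -> l <> 0 -> Un_cv (fun k => / u k) (/ l).
Proof. intros H Hl.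
  assert (C: continuity_pt (fun x => / x) l).
  { apply (continuity_pt_inv (fun x => x)); auto. apply derivable_continuous_pt, derivable_pt_id. }
  exact (continuity_seq _ _ _ C H). Qed.

Lemma CV_sqrt u l : Un_cv u l -> 0 <= l -> Un_cv (fun k => sqrt (u k)) (sqrt l).
Proof. intros H Hl. exact (continuity_seq _ _ _ (continuity_pt_sqrt _ Hl) H). Qed.

Lemma CV_eq u l l' : Un_cv u l -> l = l' -> Un_cv u l'.
Proof. intros; subst; auto. Qed.

Lemma CV_ext u v l : (forall k, u k = v k) -> Un_cv u l -> Un_cv v l.
Proof. intros H. apply Un_cv_ext; auto. Qed.

Lemma CV_event u v l : (exists K, forall k, (K <= k)%nat -> u k = v k) -> Un_cv v l -> Un_cv u l.
Proof. intros [K HK] H e He. destruct (H e He) as [N HN]. exists (Nat.max N K). intros k Hk.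
  rewrite HK by lia. apply HN; lia. Qed.

Lemma CV_rsum n (u : nat -> nat -> R) l : (forall j, (j < n)%nat -> Un_cv (fun k => u k j) (l j)) ->
  Un_cv (fun k => rsum n (u k)) (rsum n l).
Proof. induction n; intros H; simpl. apply CV_const.
  apply CV_plus. apply IHn; intros; apply H; lia. apply H; lia. Qed.

Lemma CV_abs u l : Un_cv u l -> Un_cv (fun k => Rabs (u k)) (Rabs l).
Proof. apply cv_cvabs. Qed.

Lemma CV_inv_nat : Un_cv (fun k => / (INR k + 1)) 0.
Proof. exact RinvN_cv. Qed.

Lemma CV_squeeze u l e : Un_cv e 0 -> (forall k, Rabs (u k - l) <= e k) -> Un_cv u l.
Proof. intros He H eps Heps. destruct (He eps Heps) as [N HN]. exists N. intros k Hk.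
  specialize (HN k Hk). unfold Rdist in *. rewrite Rminus_0_r in HN. specialize (H k).
  pose proof (Rle_abs (e k)). lra. Qed.

Lemma CV_sign_pos u l : Un_cv u l -> 0 < l -> exists K, forall k, (K <= k)%nat -> 0 < u k.
Proof. intros H Hl. destruct (H l Hl) as [N HN]. exists N; intros k Hk. specialize (HN k Hk).
  unfold Rdist in HN. apply Rabs_def2 in HN. lra. Qed.

Lemma CV_sign_neg u l : Un_cv u l -> l < 0 -> exists K, forall k, (K <= k)%nat -> u k < 0.
Proof. intros H Hl. destruct (H (-l) ltac:(lra)) as [N HN]. exists N; intros k Hk. specialize (HN k Hk).
  unfold Rdist in HN. apply Rabs_def2 in HN. lra. Qed.

Definition seqc q (g : (nat -> R) -> R) (v0 : nat -> R) : Prop :=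
  forall wk : nat -> nat -> R, (forall j, (j < q)%nat -> Un_cv (fun k => wk k j) (v0 j)) ->
    Un_cv (fun k => g (wk k)) (g v0).

Lemma inv_nat_pos k : 0 < / (INR k + 1).
Proof. apply Rinv_0_lt_compat. pose proof (pos_INR k); lra. Qed.

Lemma seqc_ed q g v0 : seqc q g v0 -> forall eps, 0 < eps -> exists delta, 0 < delta /\
  forall w, vnorm q (fun j => w j - v0 j) < delta -> Rabs (g w - g v0) < eps.
Proof.
  intros Hs eps He. apply NNPP. intro Hn.
  assert (Hk: forall k:nat, exists w, vnorm q (fun j => w j - v0 j) < /(INR k + 1) /\ eps <= Rabs (g w - g v0)).
  { intro k. apply NNPP; intro Hc. apply Hn. exists (/(INR k+1)). split. apply inv_nat_pos.
    intros w Hw. apply Rnot_le_lt. intro Hle. apply Hc. exists w; auto. }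
  set (wk := fun k => proj1_sig (constructive_indefinite_description _ (Hk k))).
  assert (Hw: forall k, vnorm q (fun j => wk k j - v0 j) < /(INR k + 1) /\ eps <= Rabs (g (wk k) - g v0))
    by (intro k; exact (proj2_sig (constructive_indefinite_description _ (Hk k)))).
  assert (conv: forall j, (j < q)%nat -> Un_cv (fun k => wk k j) (v0 j)).
  { intros j Hj. apply CV_squeeze with (e := fun k => / (INR k + 1)). apply CV_inv_nat.
    intros k. destruct (Hw k) as [H1 _]. pose proof (comp_le_vnorm q (fun j => wk k j - v0 j) j Hj). simpl in H. lra. }
  destruct (Hs wk conv eps He) as [N HN]. specialize (HN N (le_n N)). unfold Rdist in HN. destruct (Hw N). lra.
Qed.

Definition CD q (f : (nat -> R) -> R) (v0 : nat -> R) (D : nat -> R) : Prop :=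
  exists Q : (nat -> R) -> nat -> R,
   (forall w, f w - f v0 = rsum q (fun j => (w j - v0 j) * Q w j)) /\
   (forall j, (j < q)%nat -> Q v0 j = D j) /\
   (forall j, (j < q)%nat -> seqc q (fun w => Q w j) v0).

Definition jac1 q (f : (nat -> R) -> R) (v0 : nat -> R) (D : nat -> R) : Prop :=
  forall eps, 0 < eps -> exists delta, 0 < delta /\ forall w, vnorm q (fun j => w j - v0 j) < delta ->
    Rabs (f w - f v0 - rsum q (fun j => D j * (w j - v0 j))) <= eps * vnorm q (fun j => w j - v0 j).

Lemma rsum_minus n f g : rsum n (fun j => f j - g j) = rsum n f - rsum n g.
Proof. induction n; simpl; [ring|]. rewrite IHn; ring. Qed.

Lemma CD_cont q f v0 D : CD q f v0 D -> seqc q f v0.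
Proof. intros [Q [HQ [HD HC]]] wk Hw.
  assert (L: Un_cv (fun k => f v0 + rsum q (fun j => (wk k j - v0 j) * Q (wk k) j))
     (f v0 + rsum q (fun j => (v0 j - v0 j) * Q v0 j))).
  { apply CV_plus. apply CV_const. apply CV_rsum. intros j Hj. apply CV_mult.
    apply CV_minus; auto; apply CV_const. apply (HC j Hj wk Hw). }
  eapply CV_eq. eapply CV_ext; [|exact L]. intros k; simpl. rewrite <- HQ. ring.
  rewrite rsum_ext with (g := fun _ => 0). rewrite rsum_zero; ring. intros; ring. Qed.

Lemma CD_jac1 q f v0 D : CD q f v0 D -> jac1 q f v0 D.
Proof. intros [Q [HQ [HD HC]]] eps He.
  set (g := fun w => rsum q (fun j => Rabs (Q w j - Q v0 j))).
  assert (Hg: seqc q g v0).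
  { intros wk Hw. unfold g. apply CV_rsum. intros j Hj. apply CV_abs. apply CV_minus. apply (HC j Hj wk Hw). apply CV_const. }
  destruct (seqc_ed q g v0 Hg eps He) as [d [Hd Hdd]]. exists d; split; auto. intros w Hw.
  specialize (Hdd w Hw). assert (g0: g v0 = 0).
  { unfold g. rewrite rsum_ext with (g := fun _ => 0). apply rsum_zero. intros; rewrite Rminus_diag; apply Rabs_R0. }
  rewrite g0, Rminus_0_r in Hdd. pose proof (Rle_abs (g w)).
  rewrite HQ. rewrite <- rsum_minus.
  rewrite rsum_ext with (g := fun j => (w j - v0 j) * (Q w j - Q v0 j)).
  2:{ intros j Hj. rewrite HD by auto. ring. }
  eapply Rle_trans. apply rsum_abs.
  eapply Rle_trans. apply rsum_le with (g := fun j => vnorm q (fun j => w j - v0 j) * Rabs (Q w j - Q v0 j)).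
  { intros j Hj. rewrite Rabs_mult. apply Rmult_le_compat_r. apply Rabs_pos. apply (comp_le_vnorm q (fun j => w j - v0 j) j Hj). }
  rewrite rsum_scal. fold (g w). pose proof (vnorm_nonneg q (fun j => w j - v0 j)). nra. Qed.

Lemma jac1_local q f g v0 D : jac1 q g v0 D ->
  (exists r, 0 < r /\ forall w, vnorm q (fun j => w j - v0 j) < r -> f w = g w) -> jac1 q f v0 D.
Proof. intros H [r [Hr Hfg]] eps He. destruct (H eps He) as [d [Hd Hdd]].
  exists (Rmin d r). split. apply Rmin_pos; auto. intros w Hw.
  assert (E0: f v0 = g v0). { apply Hfg. unfold vnorm. rewrite rsum_ext with (g := fun _ => 0).
    rewrite rsum_zero, sqrt_0; auto. intros; rewrite Rminus_diag; ring. }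
  rewrite E0, Hfg. apply Hdd. pose proof (Rmin_l d r); lra. pose proof (Rmin_r d r); lra. Qed.

Lemma jac1_Dext q f v0 D1 D2 : (forall j, (j < q)%nat -> D1 j = D2 j) -> jac1 q f v0 D1 -> jac1 q f v0 D2.
Proof. intros E H eps He. destruct (H eps He) as [d [Hd Hdd]]. exists d; split; auto. intros w Hw.
  rewrite <- rsum_ext with (f := fun j => D1 j * (w j - v0 j)). auto. intros; rewrite E; auto. Qed.

Lemma jac1_fext q f g v0 D : (forall w, f w = g w) -> jac1 q g v0 D -> jac1 q f v0 D.
Proof. intros E H eps He. destruct (H eps He) as [d [Hd Hdd]]. exists d; split; auto. intros w Hw.
  rewrite !E; auto. Qed.

Lemma CD_Dext q f v0 D1 D2 : (forall j, (j < q)%nat -> D1 j = D2 j) -> CD q f v0 D1 -> CD q f v0 D2.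
Proof. intros E [Q [HQ [HD HC]]]. exists Q; repeat split; auto. intros; rewrite HD; auto. Qed.

Lemma CD_fext q f g v0 D : (forall w, f w = g w) -> CD q g v0 D -> CD q f v0 D.
Proof. intros E [Q [HQ [HD HC]]]. exists Q; repeat split; auto. intros; rewrite !E; auto. Qed.

Lemma fin_delta p (P : nat -> R -> Prop) : (forall i d d', 0 < d' <= d -> P i d -> P i d') ->
  (forall i, (i < p)%nat -> exists d, 0 < d /\ P i d) -> exists d, 0 < d /\ forall i, (i < p)%nat -> P i d.
Proof. intros Hm. induction p; intros H. exists 1; split; [lra| intros; lia].
  destruct IHp as [d1 [Hd1 H1]]. intros; apply H; lia.
  destruct (H p ltac:(lia)) as [d2 [Hd2 H2]]. exists (Rmin d1 d2). split. apply Rmin_pos; auto.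
  intros i Hi. pose proof (Rmin_l d1 d2); pose proof (Rmin_r d1 d2). pose proof (Rmin_pos d1 d2 Hd1 Hd2).
  destruct (Nat.eq_dec i p) as [->|]. apply Hm with d2; auto; lra. apply Hm with d1. lra. apply H1; lia. Qed.

Lemma jac_rows p q f z J : (forall i, (i < p)%nat -> jac1 q (fun w => f w i) z (J i)) -> jac_at p q f z J.
Proof. intros H eps He. set (e' := eps / (INR p + 1)).
  assert (He': 0 < e') by (unfold e'; apply Rdiv_lt_0_compat; auto; pose proof (pos_INR p); lra).
  destruct (fin_delta p (fun i d => forall w, vnorm q (fun j => w j - z j) < d ->
    Rabs (f w i - f z i - rsum q (fun j => J i j * (w j - z j))) <= e' * vnorm q (fun j => w j - z j))) as [d [Hd Hdd]].
  { intros i d d' Hdd' Hp w Hw. apply Hp; lra. }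
  { intros i Hi. apply (H i Hi e' He'). }
  exists d; split; auto. intros w Hw. eapply Rle_trans. apply vnorm_le_sum_abs.
  eapply Rle_trans. apply rsum_le with (g := fun _ => e' * vnorm q (fun j => w j - z j)). intros i Hi; apply Hdd; auto.
  rewrite rsum_const. pose proof (vnorm_nonneg q (fun j => w j - z j)). pose proof (pos_INR p).
  unfold e'. replace (INR p * (eps / (INR p + 1) * vnorm q (fun j => w j - z j))) with
    (eps * vnorm q (fun j => w j - z j) * (INR p / (INR p + 1))) by (field; lra).
  assert (INR p / (INR p + 1) <= 1). { apply Rmult_le_reg_r with (INR p + 1). lra. unfold Rdiv. rewrite Rmult_assoc, Rinv_l; lra. }
  assert (0 <= eps * vnorm q (fun j => w j - z j)) by nra. nra. Qed.

Lemma jac_row p q f z J i : jac_at p q f z J -> (i < p)%nat -> jac1 q (fun w => f w i) z (J i).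
Proof. intros H Hi eps He. destruct (H eps He) as [d [Hd Hdd]]. exists d; split; auto. intros w Hw.
  eapply Rle_trans; [|apply Hdd; auto]. apply (comp_le_vnorm p (fun i => f w i - f z i - rsum q (fun j => J i j * (w j - z j))) i Hi). Qed.

Lemma vnorm_ext q u v : (forall j, (j < q)%nat -> u j = v j) -> vnorm q u = vnorm q v.
Proof. intros H. unfold vnorm. f_equal. apply rsum_ext. intros; rewrite H; auto. Qed.

Lemma jac1_unique q f z D1 D2 j : jac1 q f z D1 -> jac1 q f z D2 -> (j < q)%nat -> D1 j = D2 j.
Proof. intros H1 H2 Hj. apply NNPP; intro Hne.
  set (e := Rabs (D1 j - D2 j) / 4). assert (He: 0 < e) by (unfold e; apply Rdiv_lt_0_compat; [apply Rabs_pos_lt; lra| lra]).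
  destruct (H1 e He) as [d1 [Hd1 K1]]. destruct (H2 e He) as [d2 [Hd2 K2]].
  set (s := Rmin d1 d2 / 2). assert (Hs: 0 < s) by (unfold s; pose proof (Rmin_pos d1 d2 Hd1 Hd2); lra).
  set (w := fun l => z l + s * ecol j l).
  assert (Ew: vnorm q (fun l => w l - z l) = s).
  { rewrite vnorm_ext with (v := fun l => s * ecol j l). rewrite vnorm_ecol; auto. apply Rabs_pos_eq; lra.
    intros; unfold w; ring. }
  assert (Es: forall D, rsum q (fun l => D l * (w l - z l)) = D j * s).
  { intros D. rewrite rsum_ext with (g := fun l => (D l * s) * ecol j l). apply rsum_ecol; auto.
    intros; unfold w; ring. }
  pose proof (Rmin_l d1 d2); pose proof (Rmin_r d1 d2).
  specialize (K1 w ltac:(rewrite Ew; unfold s; lra)). specialize (K2 w ltac:(rewrite Ew; unfold s; lra)).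
  rewrite Ew, Es in K1, K2.
  assert (Rabs ((D1 j - D2 j) * s) <= 2 * e * s).
  { replace ((D1 j - D2 j) * s) with (-(f w - f z - D1 j * s) + (f w - f z - D2 j * s)) by ring.
    eapply Rle_trans. apply Rabs_triang. rewrite Rabs_Ropp. lra. }
  rewrite Rabs_mult, (Rabs_pos_eq s) in H3 by lra. unfold e in H3. 
  assert (0 < Rabs (D1 j - D2 j)) by (apply Rabs_pos_lt; lra). nra. Qed.

Lemma seqc_const q c v0 : seqc q (fun _ => c) v0.
Proof. intros wk _. apply CV_const. Qed.

Lemma CD_const q c v0 : CD q (fun _ => c) v0 (fun _ => 0).
Proof. exists (fun _ _ => 0). repeat split; auto. intros w. rewrite rsum_ext with (g := fun _ => 0).
  rewrite rsum_zero; ring. intros; ring. intros; apply seqc_const. Qed.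

Lemma CD_proj q k v0 : (k < q)%nat -> CD q (fun w => w k) v0 (ecol k).
Proof. intros Hk. exists (fun _ j => ecol k j). repeat split; auto.
  intros w. rewrite rsum_ecol; auto. intros; apply seqc_const. Qed.

Lemma CD_plus q f g v0 Df Dg : CD q f v0 Df -> CD q g v0 Dg -> CD q (fun w => f w + g w) v0 (fun j => Df j + Dg j).
Proof. intros [Qf [Hf [Df' Cf]]] [Qg [Hg [Dg' Cg]]]. exists (fun w j => Qf w j + Qg w j). repeat split.
  - intros w. rewrite rsum_ext with (g := fun j => (w j - v0 j) * Qf w j + (w j - v0 j) * Qg w j) by (intros; ring).
    rewrite rsum_plus, <- Hf, <- Hg. ring.
  - intros j Hj. rewrite Df', Dg'; auto.
  - intros j Hj wk Hw. apply CV_plus; [apply Cf| apply Cg]; auto. Qed.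

Lemma CD_mult q f g v0 Df Dg : CD q f v0 Df -> CD q g v0 Dg ->
  CD q (fun w => f w * g w) v0 (fun j => f v0 * Dg j + g v0 * Df j).
Proof. intros Hfc Hgc. pose proof (CD_cont _ _ _ _ Hfc) as Cfc. destruct Hfc as [Qf [Hf [Df' Cf]]]. destruct Hgc as [Qg [Hg [Dg' Cg]]].
  exists (fun w j => f w * Qg w j + g v0 * Qf w j). repeat split.
  - intros w. rewrite rsum_ext with (g := fun j => f w * ((w j - v0 j) * Qg w j) + g v0 * ((w j - v0 j) * Qf w j)) by (intros; ring).
    rewrite rsum_plus, !rsum_scal, <- Hf, <- Hg. ring.
  - intros j Hj. rewrite Df', Dg'; auto.
  - intros j Hj wk Hw. apply CV_plus. apply CV_mult; [apply Cfc| apply Cg]; auto.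
    apply CV_mult. apply CV_const. apply Cf; auto. Qed.

Lemma CD_scal q c f v0 Df : CD q f v0 Df -> CD q (fun w => c * f w) v0 (fun j => c * Df j).
Proof. intros H. eapply CD_Dext; [| apply CD_mult; [apply CD_const| exact H]]. intros; simpl; ring. Qed.

Lemma CD_opp q f v0 Df : CD q f v0 Df -> CD q (fun w => - f w) v0 (fun j => - Df j).
Proof. intros H. eapply CD_fext; [| eapply CD_Dext; [| apply (CD_scal q (-1) f v0 Df H)]]; intros; simpl; ring. Qed.

Lemma CD_minus q f g v0 Df Dg : CD q f v0 Df -> CD q g v0 Dg -> CD q (fun w => f w - g w) v0 (fun j => Df j - Dg j).
Proof. intros H1 H2. eapply CD_fext; [| eapply CD_Dext; [| apply (CD_plus _ _ _ _ _ _ H1 (CD_opp _ _ _ _ H2))]];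
  intros; simpl; ring. Qed.

Lemma CD_sqrt q g v0 Dg : (forall w, 0 <= g w) -> 0 < g v0 -> CD q g v0 Dg ->
  CD q (fun w => sqrt (g w)) v0 (fun j => Dg j / (2 * sqrt (g v0))).
Proof. intros Hnn Hpos Hgc. pose proof (CD_cont _ _ _ _ Hgc) as Cg0. destruct Hgc as [Q [HQ [HD HC]]].
  pose proof (sqrt_lt_R0 _ Hpos) as Hs0.
  exists (fun w j => Q w j * / (sqrt (g w) + sqrt (g v0))). repeat split.
  - intros w. pose proof (sqrt_pos (g w)). 
    rewrite rsum_ext with (g := fun j => / (sqrt (g w) + sqrt (g v0)) * ((w j - v0 j) * Q w j)) by (intros; ring).
    rewrite rsum_scal, <- HQ.
    assert (E: g w - g v0 = (sqrt (g w) - sqrt (g v0)) * (sqrt (g w) + sqrt (g v0))).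
    { rewrite <- (pow2_sqrt (g w)) at 1 by auto. rewrite <- (pow2_sqrt (g v0)) at 1 by lra. ring. }
    rewrite E. field. lra.
  - intros j Hj. rewrite HD; auto. field; lra.
  - intros j Hj wk Hw. apply CV_mult. apply HC; auto. apply CV_inv'. apply CV_plus. apply CV_sqrt. apply Cg0; auto. lra.
    apply CV_const. pose proof (sqrt_pos (g v0)); lra. Qed.

Definition JC q (f : (nat -> R) -> R) (Q : (nat -> R) -> (nat -> R) -> nat -> R) : Prop :=
  (forall v w, f w - f v = rsum q (fun j => (w j - v j) * Q v w j)) /\
  (forall j, (j < q)%nat -> forall v0 vk wk, (forall l, (l < q)%nat -> Un_cv (fun k => vk k l) (v0 l)) ->
     (forall l, (l < q)%nat -> Un_cv (fun k => wk k l) (v0 l)) -> Un_cv (fun k => Q (vk k) (wk k) j) (Q v0 v0 j)).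

Definition JCex q f := exists Q, JC q f Q.

Lemma JC_cont q f Q v0 : JC q f Q -> seqc q f v0.
Proof. intros [HQ HC] wk Hw.
  assert (L: Un_cv (fun k => f v0 + rsum q (fun j => (wk k j - v0 j) * Q v0 (wk k) j))
     (f v0 + rsum q (fun j => (v0 j - v0 j) * Q v0 v0 j))).
  { apply CV_plus. apply CV_const. apply CV_rsum. intros j Hj. apply CV_mult.
    apply CV_minus; auto; apply CV_const. apply (HC j Hj v0 (fun _ => v0) wk); auto. intros; apply CV_const. }
  eapply CV_eq. eapply CV_ext; [|exact L]. intros k; simpl. rewrite <- HQ. ring.
  rewrite rsum_ext with (g := fun _ => 0). rewrite rsum_zero; ring. intros; ring. Qed.

Lemma JC_CD q f Q v0 : JC q f Q -> CD q f v0 (fun j => Q v0 v0 j).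
Proof. intros [HQ HC]. exists (fun w j => Q v0 w j). repeat split; auto.
  intros j Hj wk Hw. apply (HC j Hj v0 (fun _ => v0) wk); auto. intros; apply CV_const. Qed.

Lemma JC_fext q f g Q : (forall w, f w = g w) -> JC q g Q -> JC q f Q.
Proof. intros E [H1 H2]. split; auto. intros; rewrite !E; auto. Qed.

Lemma JC_const q c : JCex q (fun _ => c).
Proof. exists (fun _ _ _ => 0). split. intros. rewrite rsum_ext with (g := fun _ => 0). rewrite rsum_zero; ring. intros; ring.
  intros; apply CV_const. Qed.

Lemma JC_proj q k : (k < q)%nat -> JCex q (fun w => w k).
Proof. intros Hk. exists (fun _ _ j => ecol k j). split. intros. rewrite rsum_ecol; auto. intros; apply CV_const. Qed.

Lemma JC_plus q f g : JCex q f -> JCex q g -> JCex q (fun w => f w + g w).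
Proof. intros [Qf [Hf Cf]] [Qg [Hg Cg]]. exists (fun v w j => Qf v w j + Qg v w j). split.
  - intros v w. rewrite rsum_ext with (g := fun j => (w j - v j) * Qf v w j + (w j - v j) * Qg v w j) by (intros; ring).
    rewrite rsum_plus, <- Hf, <- Hg. ring.
  - intros. apply CV_plus; [apply Cf| apply Cg]; auto. Qed.

Lemma JC_mult q f g : JCex q f -> JCex q g -> JCex q (fun w => f w * g w).
Proof. intros [Qf Jf] [Qg Jg]. pose proof (fun v0 => JC_cont _ _ _ v0 Jf) as Cf0. pose proof (fun v0 => JC_cont _ _ _ v0 Jg) as Cg0.
  destruct Jf as [Hf Cf]. destruct Jg as [Hg Cg].
  exists (fun v w j => f w * Qg v w j + g v * Qf v w j). split.
  - intros v w. rewrite rsum_ext with (g := fun j => f w * ((w j - v j) * Qg v w j) + g v * ((w j - v j) * Qf v w j)) by (intros; ring).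
    rewrite rsum_plus, !rsum_scal, <- Hf, <- Hg. ring.
  - intros j Hj v0 vk wk Hv Hw. apply CV_plus; apply CV_mult; auto. apply Cf0; auto. apply Cg0; auto. Qed.

Lemma JC_ext' q f g : (forall w, f w = g w) -> JCex q g -> JCex q f.
Proof. intros E [Q H]. exists Q. eapply JC_fext; eauto. Qed.

Lemma JC_rsum q N (h : nat -> (nat -> R) -> R) : (forall j, (j < N)%nat -> JCex q (h j)) ->
  JCex q (fun w => rsum N (fun j => h j w)).
Proof. induction N; intros H; simpl. apply JC_const. apply JC_plus. apply IHN; intros; apply H; lia. apply H; lia. Qed.

Lemma JC_tsum q n k (G : list nat -> (nat -> R) -> R) :
  (forall l, Forall (fun j => (j < n)%nat) l -> JCex q (G l)) ->
  JCex q (fun w => tsum n k (fun l => G l w)).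
Proof. revert G; induction k; intros G H; simpl. apply H; constructor.
  apply (JC_rsum q n (fun j w => tsum n k (fun l => G (j :: l) w))). intros j Hj.
  apply (IHk (fun l => G (j :: l))). intros l Hl. apply H. constructor; auto. Qed.

Lemma JC_prodx q l : Forall (fun j => (j < q)%nat) l -> JCex q (fun w => prodx w l).
Proof. induction l; intros H; simpl. apply JC_const. inversion H; subst.
  apply (JC_mult q (fun w => w a) (fun w => fold_right (fun j acc => w j * acc) 1 l)). apply JC_proj; auto. apply IHl; auto. Qed.

Lemma JC_tapp m n T i : JCex (n + 1) (fun w => tapp m n T w i).
Proof. unfold tapp. apply (JC_tsum (n+1) n (m-1) (fun l w => T (i :: l) * prodx w l)).
  intros l Hl. apply JC_mult. apply JC_const. apply JC_prodx. eapply Forall_impl; [|exact Hl]. simpl; intros; lia. Qed.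

Lemma JC_F m n A B i : JCex (n + 1) (fun w => Fmap m n A B w i).
Proof. unfold Fmap. apply (JC_ext' _ _ (fun w => w n * (w n * 1) * tapp m n B w i + (-1) * tapp m n A w i)).
  intros; simpl; ring.
  apply JC_plus; apply JC_mult. apply JC_mult. apply JC_proj; lia. apply JC_mult. apply JC_proj; lia. apply JC_const.
  apply JC_tapp. apply JC_const. apply JC_tapp. Qed.

Definition Dphi tau a0 b0 da db := tau * (da + db - (a0 * da + b0 * db) / sqrt (a0 ^ 2 + b0 ^ 2))
  + (1 - tau) * (if Rlt_dec 0 a0 then if Rlt_dec 0 b0 then b0 * da + a0 * db else 0 else 0).

Lemma near_pos q f v0 D : CD q f v0 D -> 0 < f v0 -> exists r, 0 < r /\ forall w, vnorm q (fun j => w j - v0 j) < r -> 0 < f w.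
Proof. intros H Hp. destruct (seqc_ed q f v0 (CD_cont _ _ _ _ H) (f v0) Hp) as [d [Hd Hdd]].
  exists d; split; auto. intros w Hw. specialize (Hdd w Hw). apply Rabs_def2 in Hdd. lra. Qed.

Lemma near_neg q f v0 D : CD q f v0 D -> f v0 < 0 -> exists r, 0 < r /\ forall w, vnorm q (fun j => w j - v0 j) < r -> f w < 0.
Proof. intros H Hp. destruct (seqc_ed q f v0 (CD_cont _ _ _ _ H) (- f v0) ltac:(lra)) as [d [Hd Hdd]].
  exists d; split; auto. intros w Hw. specialize (Hdd w Hw). apply Rabs_def2 in Hdd. lra. Qed.

Lemma posp_neg x : x < 0 -> posp x = 0.
Proof. intros; unfold posp; apply Rmax_right; lra. Qed.
Lemma posp_pos x : 0 < x -> posp x = x.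
Proof. intros; unfold posp; apply Rmax_left; lra. Qed.

Lemma phi_row q tau fa fb v0 Da Db : CD q fa v0 Da -> CD q fb v0 Db ->
  (fa v0 < 0 \/ fb v0 < 0 \/ (0 < fa v0 /\ 0 < fb v0)) ->
  jac1 q (fun w => phi tau (fa w) (fb w)) v0 (fun j => Dphi tau (fa v0) (fb v0) (Da j) (Db j)).
Proof. intros Ha Hb Hc.
  assert (Hg0: 0 < fa v0 * fa v0 + fb v0 * fb v0) by (destruct Hc as [|[|[]]]; nra).
  assert (Hs: 0 < sqrt (fa v0 * fa v0 + fb v0 * fb v0)) by (apply sqrt_lt_R0; auto).
  assert (E2: fa v0 ^ 2 + fb v0 ^ 2 = fa v0 * fa v0 + fb v0 * fb v0) by ring.
  assert (CT: CD q (fun w => tau * (fa w + fb w - sqrt (fa w * fa w + fb w * fb w))) v0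
     (fun j => tau * ((Da j + Db j) - ((fa v0 * Da j + fa v0 * Da j) + (fb v0 * Db j + fb v0 * Db j)) / (2 * sqrt (fa v0 * fa v0 + fb v0 * fb v0))))).
  { apply CD_scal. apply CD_minus. apply CD_plus; auto.
    apply (CD_sqrt q (fun w => fa w * fa w + fb w * fb w)). intros; nra. auto.
    apply CD_plus; apply CD_mult; auto. }
  destruct Hc as [Hn|[Hn|[Hp1 Hp2]]].
  - destruct (near_neg _ _ _ _ Ha Hn) as [r [Hr Hrr]].
    apply jac1_local with (g := fun w => tau * (fa w + fb w - sqrt (fa w * fa w + fb w * fb w))).
    + eapply jac1_Dext; [| apply CD_jac1; exact CT]. intros j Hj. unfold Dphi. rewrite E2.
      destruct (Rlt_dec 0 (fa v0)); [lra|]. field. lra.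
    + exists r; split; auto. intros w Hw. unfold phi. rewrite (posp_neg (fa w)) by auto.
      replace (fa w ^ 2 + fb w ^ 2) with (fa w * fa w + fb w * fb w) by ring. ring.
  - destruct (near_neg _ _ _ _ Hb Hn) as [r [Hr Hrr]].
    apply jac1_local with (g := fun w => tau * (fa w + fb w - sqrt (fa w * fa w + fb w * fb w))).
    + eapply jac1_Dext; [| apply CD_jac1; exact CT]. intros j Hj. unfold Dphi. rewrite E2.
      destruct (Rlt_dec 0 (fa v0)); [destruct (Rlt_dec 0 (fb v0)); [lra|]|]; field; lra.
    + exists r; split; auto. intros w Hw. unfold phi. rewrite (posp_neg (fb w)) by auto.
      replace (fa w ^ 2 + fb w ^ 2) with (fa w * fa w + fb w * fb w) by ring. ring.
  - destruct (near_pos _ _ _ _ Ha Hp1) as [r1 [Hr1 Hrr1]]. destruct (near_pos _ _ _ _ Hb Hp2) as [r2 [Hr2 Hrr2]].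
    apply jac1_local with (g := fun w => tau * (fa w + fb w - sqrt (fa w * fa w + fb w * fb w)) + (1 - tau) * (fa w * fb w)).
    + eapply jac1_Dext; [| apply CD_jac1; apply CD_plus; [exact CT| apply CD_scal; apply CD_mult; eauto]].
      intros j Hj. unfold Dphi. rewrite E2.
      destruct (Rlt_dec 0 (fa v0)); [destruct (Rlt_dec 0 (fb v0)); [|lra]|lra]. field; lra.
    + exists (Rmin r1 r2); split. apply Rmin_pos; auto. intros w Hw.
      pose proof (Rmin_l r1 r2); pose proof (Rmin_r r1 r2).
      unfold phi. rewrite (posp_pos (fa w)) by (apply Hrr1; lra). rewrite (posp_pos (fb w)) by (apply Hrr2; lra).
      replace (fa w ^ 2 + fb w ^ 2) with (fa w * fa w + fb w * fb w) by ring. ring.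
Qed.

Lemma CD_sumsq q N v0 : (N <= q)%nat ->
  CD q (fun w => rsum N (fun j => w j ^ 2)) v0 (fun j => if (j <? N)%nat then 2 * v0 j else 0).
Proof. induction N; intros HN; simpl.
  - eapply CD_Dext; [|apply CD_const]. intros; simpl; auto.
  - apply CD_fext with (g := fun w => rsum N (fun j => w j ^ 2) + w N * w N).
    intros; simpl; ring.
    eapply CD_Dext; [| apply CD_plus; [apply IHN; lia| apply (CD_mult q (fun w => w N) (fun w => w N)); apply CD_proj; lia]].
    intros j Hj. unfold ecol. destruct (Nat.ltb_spec j N); destruct (Nat.ltb_spec j (S N)); destruct (Nat.eqb_spec N j); subst; try lia; ring.
Qed.

Definition cvrow (x F : R) : R :=
  if Req_EM_T x 0 then (if Req_EM_T F 0 then 1 else if Rlt_dec 0 F then 1 else 0)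
  else if Rlt_dec 0 x then (if Req_EM_T F 0 then 1 else 0) else 0.

Definition procrow tau xi Fi ci si ei Ji :=
  let default := tau * (1 - xi / norm2 xi Fi) * ei + tau * (1 - Fi / norm2 xi Fi) * Ji in
  if Req_EM_T xi 0 then
    (if Req_EM_T Fi 0 then
       tau * (1 + ci / norm2 ci si) * ei + tau * (1 + si / norm2 ci si) * Ji
     else default)
  else if Rlt_dec 0 xi then
    (if Req_EM_T Fi 0 then
       (if Rlt_dec si 0 then (tau + (1 - tau) * xi) * Ji else tau * Ji)
     else if Rlt_dec 0 Fi then
       (tau * (1 - xi / norm2 xi Fi) + (1 - tau) * Fi) * ei
       + (tau * (1 - Fi / norm2 xi Fi) + (1 - tau) * xi) * Ji
     else default)
  else default.

Lemma procP_row n tau z Fz JF i j :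
  procP n tau z Fz JF i j = procrow tau (z i) (Fz i) (cvec n z Fz i) (svec n z Fz JF i) (ecol i j) (JF i j).
Proof. reflexivity. Qed.

Lemma cvec_row n z Fz i : cvec n z Fz i = cvrow (z i) (Fz i).
Proof. reflexivity. Qed.

Definition Tpart tau a b da db := tau * (da + db - (a * da + b * db) / sqrt (a ^ 2 + b ^ 2)).

Lemma CV_sq u l : Un_cv u l -> Un_cv (fun k => u k ^ 2) (l ^ 2).
Proof. intros H. eapply CV_eq. eapply CV_ext; [| apply (CV_mult _ _ _ _ H H)]. intros; simpl; ring. simpl; ring. Qed.

Lemma tau_cont tau (a b db : nat -> R) da al bl dbl : Un_cv a al -> Un_cv b bl -> Un_cv db dbl ->
  0 < al ^ 2 + bl ^ 2 ->
  Un_cv (fun k => Tpart tau (a k) (b k) da (db k)) (Tpart tau al bl da dbl).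
Proof. intros Ha Hb Hd Hp. unfold Tpart, Rdiv. apply CV_mult. apply CV_const. apply CV_minus.
  apply CV_plus. apply CV_const. auto. apply CV_mult. apply CV_plus. apply CV_mult; auto; apply CV_const.
  apply CV_mult; auto. apply CV_inv'. apply CV_sqrt. apply CV_plus; apply CV_sq; auto. lra.
  pose proof (sqrt_lt_R0 _ Hp); lra. Qed.

Lemma Dphi_split tau a b da db : Dphi tau a b da db = Tpart tau a b da db +
  (1 - tau) * (if Rlt_dec 0 a then if Rlt_dec 0 b then b * da + a * db else 0 else 0).
Proof. reflexivity. Qed.

Lemma row_lim tau x F s da Jv (a b sg db e : nat -> R) :
  0 < tau < 1 -> (forall k, 0 < e k) -> Un_cv e 0 -> Un_cv sg s -> Un_cv db Jv ->
  (forall k, a k = x - cvrow x F * e k) -> (forall k, b k = F - e k * sg k) ->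
  (0 < x -> F = 0 -> s <> 0) ->
  (exists K, forall k, (K <= k)%nat -> a k < 0 \/ b k < 0 \/ (0 < a k /\ 0 < b k)) /\
  Un_cv (fun k => Dphi tau (a k) (b k) da (db k)) (procrow tau x F (cvrow x F) s da Jv).
Proof.
  intros Ht He He0 Hs Hd Ha Hb H3.
  assert (Hb0: Un_cv b F). { eapply CV_eq. eapply CV_ext; [intro k; symmetry; apply Hb|].
    apply CV_minus. apply CV_const. apply CV_mult; eauto. ring. }
  assert (Ha0: Un_cv a x). { eapply CV_eq. eapply CV_ext; [intro k; symmetry; apply Ha|].
    apply CV_minus. apply CV_const. apply CV_mult; eauto. apply CV_const. ring. }
  assert (Tc: x <> 0 \/ F <> 0 -> Un_cv (fun k => Tpart tau (a k) (b k) da (db k)) (Tpart tau x F da Jv)).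
  { intros Hne. apply tau_cont; auto. destruct Hne; nra. }
  assert (Zp: forall (P : nat -> R), (exists K, forall k, (K <= k)%nat -> P k = 0) ->
     Un_cv (fun k => Dphi tau (a k) (b k) da (db k)) (Tpart tau x F da Jv) -> Un_cv (fun k => Dphi tau (a k) (b k) da (db k)) (Tpart tau x F da Jv)) by auto.
  unfold cvrow, procrow in *. unfold norm2.
  destruct (Req_EM_T x 0) as [Hx0|Hx0]; [subst x|]; [destruct (Req_EM_T F 0) as [HF0|HF0]|].
  - (* S1 *)
    subst F. split. exists 0%nat. intros k _. left. rewrite Ha. specialize (He k). lra.
    apply CV_ext with (u := fun k => tau * (da + db k + (da + sg k * db k) / sqrt (1 + sg k ^ 2))).
    { intros k. rewrite Dphi_split. rewrite Ha, Hb. destruct (Rlt_dec 0 (0 - 1 * e k)) as [r|r]. specialize (He k); lra.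
      unfold Tpart. specialize (He k).
      replace ((0 - 1 * e k) ^ 2 + (0 - e k * sg k) ^ 2) with (e k ^ 2 * (1 + sg k ^ 2)) by ring.
      rewrite sqrt_mult_alt by nra. rewrite sqrt_pow2 by lra.
      assert (0 < sqrt (1 + sg k ^ 2)) by (apply sqrt_lt_R0; nra). field. lra. }
    eapply CV_eq. apply CV_mult. apply CV_const. apply CV_plus. apply CV_plus. apply CV_const. exact Hd.
    unfold Rdiv. apply CV_mult. apply CV_plus. apply CV_const. apply CV_mult; eauto. apply CV_inv'.
    apply CV_sqrt. apply CV_plus. apply CV_const. apply CV_sq; exact Hs. nra.
    assert (0 < sqrt (1 + s ^ 2)) by (apply sqrt_lt_R0; nra). lra.
    replace (1 ^ 2 + s ^ 2) with (1 + s ^ 2) by ring. assert (0 < sqrt (1 + s ^ 2)) by (apply sqrt_lt_R0; nra). field. lra.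
  - destruct (Rlt_dec 0 F) as [HFp|HFn].
    + (* S2 *) split. exists 0%nat. intros k _. left. rewrite Ha. specialize (He k). lra.
      eapply CV_eq. eapply CV_ext; [| apply CV_plus; [apply Tc; auto| apply (CV_const 0)]].
      intros k. rewrite Dphi_split. destruct (Rlt_dec 0 (a k)) as [r|r]. rewrite Ha in r; specialize (He k); lra. ring.
      unfold Tpart. assert (0 < sqrt (0 ^ 2 + F ^ 2)) by (apply sqrt_lt_R0; nra). field. lra.
    + assert (HFl: F < 0) by lra. destruct (CV_sign_neg _ _ Hb0 HFl) as [K HK].
      split. exists K. intros; right; left; auto.
      eapply CV_eq. eapply CV_ext; [| apply CV_plus; [apply Tc; auto| apply (CV_const 0)]].
      intros k. rewrite Dphi_split. destruct (Rlt_dec 0 (a k)) as [r|r]. rewrite Ha in r; lra. ring.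
      unfold Tpart. assert (0 < sqrt (0 ^ 2 + F ^ 2)) by (apply sqrt_lt_R0; nra). field. lra.
  - destruct (Rlt_dec 0 x) as [Hxp|Hxn].
    + destruct (CV_sign_pos _ _ Ha0 Hxp) as [Ka HKa].
      destruct (Req_EM_T F 0) as [HF0|HF0].
      * (* S3 *) subst F. specialize (H3 Hxp eq_refl).
        assert (Tl: Tpart tau x 0 da Jv = tau * Jv).
        { unfold Tpart. replace (x ^ 2 + 0 ^ 2) with (x ^ 2) by ring. rewrite sqrt_pow2 by lra. field. lra. }
        destruct (Rlt_dec s 0) as [Hsn|Hsp].
        -- destruct (CV_sign_neg _ _ Hs Hsn) as [Ks HKs].
           assert (Hbp: forall k, (Ks <= k)%nat -> 0 < b k). { intros k Hk. rewrite Hb. specialize (HKs k Hk). specialize (He k). nra. }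
           split. exists (Nat.max Ka Ks). intros k Hk. right; right. split; [apply HKa| apply Hbp]; lia.
           apply CV_event with (v := fun k => Tpart tau (a k) (b k) da (db k) + (1 - tau) * (b k * da + a k * db k)).
           { exists (Nat.max Ka Ks). intros k Hk. rewrite Dphi_split.
             destruct (Rlt_dec 0 (a k)) as [r|r]; [|specialize (HKa k ltac:(lia)); lra].
             destruct (Rlt_dec 0 (b k)) as [r'|r']; [|specialize (Hbp k ltac:(lia)); lra]. auto. }
           eapply CV_eq. apply CV_plus. apply Tc; auto. apply CV_mult. apply CV_const. apply CV_plus; apply CV_mult; eauto. apply CV_const.
           rewrite Tl. ring.
        -- assert (Hsp': 0 < s) by lra. destruct (CV_sign_pos _ _ Hs Hsp') as [Ks HKs].
           assert (Hbn: forall k, (Ks <= k)%nat -> b k < 0). { intros k Hk. rewrite Hb. specialize (HKs k Hk). specialize (He k). nra. }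
           split. exists Ks. intros k Hk. right; left; auto.
           apply CV_event with (v := fun k => Tpart tau (a k) (b k) da (db k) + (1 - tau) * 0).
           { exists Ks. intros k Hk. rewrite Dphi_split.
             destruct (Rlt_dec 0 (a k)) as [r|r]; auto. destruct (Rlt_dec 0 (b k)) as [r'|r']; auto. specialize (Hbn k Hk); lra. }
           eapply CV_eq. apply CV_plus. apply Tc; auto. apply CV_const. rewrite Tl. ring.
      * destruct (Rlt_dec 0 F) as [HFp|HFn].
        -- (* S4 *) destruct (CV_sign_pos _ _ Hb0 HFp) as [Kb HKb].
           split. exists (Nat.max Ka Kb). intros k Hk. right; right. split; [apply HKa| apply HKb]; lia.
           apply CV_event with (v := fun k => Tpart tau (a k) (b k) da (db k) + (1 - tau) * (b k * da + a k * db k)).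
           { exists (Nat.max Ka Kb). intros k Hk. rewrite Dphi_split.
             destruct (Rlt_dec 0 (a k)) as [r|r]; [|specialize (HKa k ltac:(lia)); lra].
             destruct (Rlt_dec 0 (b k)) as [r'|r']; [|specialize (HKb k ltac:(lia)); lra]. auto. }
           eapply CV_eq. apply CV_plus. apply Tc; auto. apply CV_mult. apply CV_const. apply CV_plus; apply CV_mult; eauto. apply CV_const.
           unfold Tpart. assert (0 < sqrt (x ^ 2 + F ^ 2)) by (apply sqrt_lt_R0; nra). field. lra.
        -- assert (HFl: F < 0) by lra. destruct (CV_sign_neg _ _ Hb0 HFl) as [K HK].
           split. exists K. intros; right; left; auto.
           apply CV_event with (v := fun k => Tpart tau (a k) (b k) da (db k) + (1 - tau) * 0).
           { exists K. intros k Hk. rewrite Dphi_split.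
             destruct (Rlt_dec 0 (a k)) as [r|r]; auto. destruct (Rlt_dec 0 (b k)) as [r'|r']; auto. specialize (HK k Hk); lra. }
           eapply CV_eq. apply CV_plus. apply Tc; auto. apply CV_const.
           unfold Tpart. assert (0 < sqrt (x ^ 2 + F ^ 2)) by (apply sqrt_lt_R0; nra). field. lra.
    + assert (Hxl: x < 0) by lra. split. exists 0%nat. intros k _. left. rewrite Ha. lra.
      eapply CV_eq. eapply CV_ext; [| apply CV_plus; [apply Tc; auto| apply (CV_const 0)]].
      intros k. rewrite Dphi_split. destruct (Rlt_dec 0 (a k)) as [r|r]. rewrite Ha in r; lra. ring.
      unfold Tpart. assert (0 < sqrt (x ^ 2 + F ^ 2)) by (apply sqrt_lt_R0; nra). field. lra.
Qed.

Lemma fin_K p (P : nat -> nat -> Prop) : (forall i, (i < p)%nat -> exists K, forall k, (K <= k)%nat -> P i k) ->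
  exists K, forall i, (i < p)%nat -> forall k, (K <= k)%nat -> P i k.
Proof. induction p; intros H. exists 0%nat; intros; lia.
  destruct IHp as [K1 H1]. intros; apply H; lia. destruct (H p ltac:(lia)) as [K2 H2].
  exists (Nat.max K1 K2). intros i Hi k Hk. destruct (Nat.eq_dec i p) as [->|]. apply H2; lia. apply H1; lia. Qed.

Theorem theorem2 (m n : nat) (A B : tensor) (tau : R) (z : nat -> R)
  (JF : nat -> nat -> R) :
  Nat.Even m -> (2 <= m)%nat ->
  sym_tensor m n B -> posdef_tensor m n B ->
  0 < tau < 1 ->
  jac_at n (n + 1) (Fmap m n A B) z JF ->
  (forall i, (i < n)%nat -> 0 < z i -> Fmap m n A B z i = 0 ->
     svec n z (Fmap m n A B z) JF i <> 0) ->
  in_B_subdiff (n + 1) (n + 1) (Hmap m n A B tau) z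
    (Gmat n (procP n tau z (Fmap m n A B z) JF) z).
Proof.
  intros Hev Hm Hsym Hpd Ht Hjac Hs3.
  set (Fz := Fmap m n A B z).
  set (Qf := fun i => proj1_sig (constructive_indefinite_description _ (JC_F m n A B i))).
  assert (HQ: forall i, JC (n+1) (fun w => Fmap m n A B w i) (Qf i))
    by (intro i; exact (proj2_sig (constructive_indefinite_description _ (JC_F m n A B i)))).
  assert (Uniq: forall i j, (i < n)%nat -> (j < n + 1)%nat -> Qf i z z j = JF i j).
  { intros i j Hi Hj. apply (jac1_unique (n+1) (fun w => Fmap m n A B w i) z).
    apply CD_jac1, JC_CD, HQ. apply (jac_row n (n+1)); auto. auto. }
  set (e := fun k : nat => / (INR k + 1)).
  set (c := cvec n z Fz).
  set (zs := fun k j => if (j <? n)%nat then z j - c j * e k else z j).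
  assert (Hzs: forall j, Un_cv (fun k => zs k j) (z j)).
  { intros j. unfold zs. destruct (j <? n)%nat. eapply CV_eq. apply CV_minus. apply CV_const. apply CV_mult. apply CV_const.
    unfold e; apply CV_inv_nat. ring. apply CV_const. }
  set (sg := fun i k => rsum n (fun j => c j * Qf i z (zs k) j)).
  assert (Hb: forall i k, Fmap m n A B (zs k) i = Fz i - e k * sg i k).
  { intros i k. destruct (HQ i) as [Hid _]. specialize (Hid z (zs k)).
    replace (Fmap m n A B (zs k) i) with (Fz i + (Fmap m n A B (zs k) i - Fmap m n A B z i)) by (unfold Fz; ring).
    rewrite Hid. rewrite Nat.add_1_r. simpl rsum. replace (zs k n - z n) with 0 by (unfold zs; rewrite Nat.ltb_irrefl; ring).
    rewrite rsum_ext with (g := fun j => (- e k) * (c j * Qf i z (zs k) j)).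
    rewrite rsum_scal. unfold sg. ring.
    intros j Hj. unfold zs. rewrite (proj2 (Nat.ltb_lt j n)) by auto. ring. }
  assert (Hsg: forall i, (i < n)%nat -> Un_cv (sg i) (svec n z Fz JF i)).
  { intros i Hi. unfold sg. eapply CV_eq. apply CV_rsum. intros j Hj. apply CV_mult. apply CV_const.
    apply (proj2 (HQ i) j ltac:(lia) z (fun _ => z) zs). intros; apply CV_const. intros; apply Hzs.
    unfold svec. apply rsum_ext. intros j Hj. rewrite Uniq by lia. unfold c. ring. }
  assert (Hdb: forall i j, (i < n)%nat -> (j < n + 1)%nat -> Un_cv (fun k => Qf i (zs k) (zs k) j) (JF i j)).
  { intros i j Hi Hj. rewrite <- Uniq by auto. apply (proj2 (HQ i)); auto; intros; apply Hzs. }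
  assert (Rows: forall i j, (i < n)%nat -> (j < n + 1)%nat ->
    (exists K, forall k, (K <= k)%nat -> zs k i < 0 \/ Fmap m n A B (zs k) i < 0 \/ (0 < zs k i /\ 0 < Fmap m n A B (zs k) i)) /\
    Un_cv (fun k => Dphi tau (zs k i) (Fmap m n A B (zs k) i) (ecol i j) (Qf i (zs k) (zs k) j)) (procP n tau z Fz JF i j)).
  { intros i j Hi Hj. rewrite procP_row. rewrite cvec_row.
    apply (row_lim tau (z i) (Fz i) (svec n z Fz JF i) (ecol i j) (JF i j) (fun k => zs k i)
      (fun k => Fmap m n A B (zs k) i) (sg i) (fun k => Qf i (zs k) (zs k) j) e); auto.
    - intros; apply inv_nat_pos.
    - apply CV_inv_nat.
    - intros k. unfold zs. rewrite (proj2 (Nat.ltb_lt i n)) by auto. unfold c. rewrite cvec_row. auto. }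
  destruct (fin_K n (fun i k => zs k i < 0 \/ Fmap m n A B (zs k) i < 0 \/ (0 < zs k i /\ 0 < Fmap m n A B (zs k) i))) as [K HK].
  { intros i Hi. exact (proj1 (Rows i 0%nat Hi ltac:(lia))). }
  set (Jf := fun (v : nat -> R) i j => if (i <? n)%nat then Dphi tau (v i) (Fmap m n A B v i) (ecol i j) (Qf i v v j)
     else if (j <? n)%nat then 2 * v j else 0).
  exists (fun k => zs (k + K)%nat), (fun k => Jf (zs (k + K)%nat)). split; [|split].
  - intros k. apply jac_rows. intros i Hi. destruct (Nat.ltb_spec i n) as [Hin|Hin].
    + apply jac1_fext with (g := fun w => phi tau (w i) (Fmap m n A B w i)).
      { intros w; unfold Hmap; rewrite (proj2 (Nat.ltb_lt i n)) by auto; auto. }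
      eapply jac1_Dext; [| apply (phi_row (n+1) tau (fun w => w i) (fun w => Fmap m n A B w i) (zs (k+K)%nat) (ecol i)
         (fun j => Qf i (zs (k+K)%nat) (zs (k+K)%nat) j))].
      { intros j Hj. unfold Jf. rewrite (proj2 (Nat.ltb_lt i n)) by auto. auto. }
      apply CD_proj; lia. apply JC_CD; apply HQ. apply HK; lia.
    + assert (i = n) by lia. subst i.
      apply jac1_fext with (g := fun w => rsum n (fun j => w j ^ 2) - 1).
      { intros w; unfold Hmap; rewrite Nat.ltb_irrefl; auto. }
      eapply jac1_Dext; [| apply CD_jac1; apply CD_minus; [apply CD_sumsq; lia| apply CD_const]].
      intros j Hj. unfold Jf. rewrite Nat.ltb_irrefl. destruct (j <? n)%nat; ring.
  - intros j Hj. apply (CV_shift' (fun k => zs k j)). apply Hzs.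
  - intros i j Hi Hj. apply (CV_shift' (fun k => Jf (zs k) i j)). unfold Gmat, Jf.
    destruct (Nat.ltb_spec i n) as [Hin|Hin]. apply Rows; auto.
    destruct (j <? n)%nat. apply CV_mult. apply CV_const. apply Hzs. apply CV_const.
Qed.

Print Assumptions theorem2.
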